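(* Let $0<\gamma<1$, $\lambda\ge0$, $\tau>0$, $\eta\in\mathbb{R}$, $J=\sqrt{-1}$, and let $\rho,u$ be real with $\rho u\ge0$. Define $l_0^{(2)}=l_0^{2,\gamma}-\left(\sum_{l=1}^{2}\frac1l(1-e^{-\lambda\tau})^l\right)^{\gamma}$ and $l_k^{(2)}=e^{-(\lambda+\rho u)k\tau}l_k^{2,\gamma}$ for $k\ge1$. Then for every positive integer $N$ and every $(v^0,v^1,\dots,v^N)\in\mathbb{C}^{N+1}$, $$\Re\left\{\sum_{n=0}^{N}\left(\sum_{k=0}^{n}l_k^{(2)}e^{-J\eta u k\tau}v^{n-k}\right)\overline{v^n}\right\}\ge0.$$
   Context: The coefficients $l_k^{2,\gamma}$ are defined by $\left((1-\zeta)+\tfrac12(1-\zeta)^2\right)^{\gamma}=\sum_{k=0}^\infty l_k^{2,\gamma}\zeta^k$; equivalently $l_m^{2,\gamma}=(3/2)^{\gamma}\sum_{k=0}^{m}3^{-k}g_k^\gamma g_{m-k}^\gamma$ with $g_k^\gamma=(-1)^k\binom{\gamma}{k}$. (In the paper $u=U(x_i)$ is the value of a potential at a grid point.) *)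

(* Defs.v *)
From Stdlib Require Import Reals.
From Coquelicot Require Import Coquelicot.
Open Scope R_scope.

(* real power x^y for x >= 0, with the convention 0^y = 0 (y > 0) *)
Definition rpow (x y : R) : R := if Req_EM_T x 0 then 0 else Rpower x y.

Fixpoint gbinom (g : R) (k : nat) : R :=
  match k with
  | O => 1
  | S k' => gbinom g k' * (g - INR k') / INR (S k')
  end.

Definition gcoef (g : R) (k : nat) : R := (-1) ^ k * gbinom g k.

Definition l2coef (g : R) (m : nat) : R :=
  rpow (3/2) g * sum_f_R0 (fun k => / 3 ^ k * gcoef g k * gcoef g (m - k)) m.

Definition l2mod (g lam tau rho u : R) (k : nat) : R :=
  match k with
  | O => l2coef g 0 -
         rpow (sum_f_R0 (fun i => / INR (S i) * (1 - exp (- lam * tau)) ^ (S i)) 1) g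
  | S _ => exp (- (lam + rho * u) * INR k * tau) * l2coef g k
  end.

Definition cexpmJ (theta : R) : C := (cos theta, - sin theta).

(* Main.v *)
Require Import Defs.
From Stdlib Require Import Reals Lra Lia.
From Coquelicot Require Import Coquelicot.
Open Scope R_scope.

Ltac cring := match goal with |- @eq _ ?x ?y => change (@eq C x y); ring end.

Lemma gcoef_0 g : gcoef g 0 = 1.
Proof. unfold gcoef; simpl; ring. Qed.

Lemma gcoef_S g k : gcoef g (S k) = gcoef g k * (INR k - g) / INR (S k).
Proof.
  unfold gcoef. change (gbinom g (S k)) with (gbinom g k * (g - INR k) / INR (S k)).
  change ((-1) ^ S k) with (-1 * (-1) ^ k).
  assert (INR (S k) <> 0) by (apply not_0_INR; lia).
  field; auto.
Qed.

Lemma gcoef_bound g k : 0 < g < 1 -> Rabs (gcoef g k) <= 1.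
Proof.
  intros Hg. induction k.
  - rewrite gcoef_0, Rabs_R1; lra.
  - rewrite gcoef_S. rewrite S_INR.
    pose proof (pos_INR k).
    unfold Rdiv. rewrite !Rabs_mult.
    rewrite Rabs_inv. rewrite (Rabs_right (INR k + 1)) by lra.
    assert (Rabs (INR k - g) <= INR k + 1).
    { apply Rabs_le; lra. }
    assert (Rabs (INR k - g) * / (INR k + 1) <= 1).
    { apply (Rmult_le_reg_r (INR k +1)); [lra|].
      rewrite Rmult_assoc, Rinv_l by lra. lra. }
    pose proof (Rabs_pos (gcoef g k)). pose proof (Rabs_pos (INR k - g)).
    assert (0 <= / (INR k + 1)) by (left; apply Rinv_0_lt_compat; lra).
    rewrite Rmult_assoc.
    apply Rle_trans with (1 * 1); [|lra].
    apply Rmult_le_compat; try lra.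
    apply Rmult_le_pos; lra.
Qed.

Lemma sum_SnC (a : nat -> C) n : sum_n a (S n) = Cplus (sum_n a n) (a (S n)).
Proof. rewrite sum_Sn. reflexivity. Qed.
Lemma sum_OC (a : nat -> C) : sum_n a 0 = a 0%nat.
Proof. apply sum_O. Qed.

Definition Apol g (w : C) (t : R) K : C :=
  sum_n (fun k => RtoC (gcoef g k) * Cpow (RtoC t) k * Cpow w k)%C K.
Definition Adpol g (w : C) (t : R) K : C :=
  sum_n (fun k => RtoC (INR k * gcoef g k) * Cpow (RtoC t) (k-1) * Cpow w k)%C K.

Lemma resid g w t K :
  (Cplus (Cmult (Cminus 1 (Cmult (RtoC t) w)) (Adpol g w t K))
        (Cmult (Cmult (RtoC g) w) (Apol g w t K)))
  = Cmult (Cmult (Copp (RtoC (INR (S K) * gcoef g (S K)))) (Cpow w (S K))) (Cpow (RtoC t) K).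
Proof.
  induction K.
  - unfold Adpol, Apol. rewrite !sum_OC. rewrite gcoef_S, gcoef_0.
    simpl. apply injective_projections; simpl; field.
  - unfold Adpol, Apol in *. rewrite !sum_SnC.
    replace (S K - 1)%nat with K by lia.
    assert (E : forall a b c d e f : C, Cplus (Cmult a (Cplus b d)) (Cmult c (Cplus f e))
            = Cplus (Cplus (Cmult a b) (Cmult c f)) (Cplus (Cmult a d) (Cmult c e))).
    { intros; ring. }
    rewrite E, IHK. clear E IHK.
    rewrite (gcoef_S g (S K)).
    set (G := gcoef g (S K)).
    rewrite !S_INR.
    rewrite !Cpow_S.
    assert (INR K + 1 + 1 <> 0) by (pose proof (pos_INR K); lra).
    replace ((INR K + 1 + 1) * (G * (INR K + 1 - g) / (INR K + 1 + 1))) with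
      (G * (INR K + 1 - g)) by (field; auto).
    repeat (rewrite RtoC_mult || rewrite RtoC_plus || rewrite RtoC_minus || rewrite RtoC_opp).
    ring.
Qed.

Definition cder (f : R -> C) (t : R) (l : C) :=
  is_derive (fun s => fst (f s)) t (fst l) /\ is_derive (fun s => snd (f s)) t (snd l).

Lemma is_derive_eq (f : R -> R) x l l' : is_derive f x l -> l = l' -> is_derive f x l'.
Proof. intros H ->; exact H. Qed.

Lemma cder_ext f g t l : (forall s, f s = g s) -> cder f t l -> cder g t l.
Proof.
  intros E [H1 H2]; split.
  - apply (is_derive_ext (fun s => fst (f s))); [intro; rewrite E; auto| auto].
  - apply (is_derive_ext (fun s => snd (f s))); [intro; rewrite E; auto| auto].
Qed.

Lemma cder_eq f t l l' : cder f t l -> l = l' -> cder f t l'.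
Proof. intros H ->; exact H. Qed.

Lemma Rderive_const (a x : R) : is_derive (fun _ : R => a) x 0.
Proof. apply is_derive_Reals, derivable_pt_lim_const. Qed.

Lemma cder_const (c : C) t : cder (fun _ => c) t (RtoC 0).
Proof. split; simpl; apply Rderive_const. Qed.

Lemma cder_plus f g t a b : cder f t a -> cder g t b ->
  cder (fun s => Cplus (f s) (g s)) t (Cplus a b).
Proof.
  intros [H1 H2] [H3 H4]; split; simpl.
  - apply (is_derive_plus (fun s => fst (f s)) (fun s => fst (g s))); auto.
  - apply (is_derive_plus (fun s => snd (f s)) (fun s => snd (g s))); auto.
Qed.

Lemma Rderive_mult (f g : R -> R) x a b : is_derive f x a -> is_derive g x b ->
  is_derive (fun s => f s * g s) x (a * g x + f x * b).
Proof. intros H1 H2. apply (is_derive_mult f g x a b H1 H2). intros; apply Rmult_comm. Qed.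

Lemma Rderive_minus (f g : R -> R) x a b : is_derive f x a -> is_derive g x b ->
  is_derive (fun s => f s - g s) x (a - b).
Proof. intros H1 H2. apply (is_derive_minus f g x a b H1 H2). Qed.

Lemma Rderive_plus (f g : R -> R) x a b : is_derive f x a -> is_derive g x b ->
  is_derive (fun s => f s + g s) x (a + b).
Proof. intros H1 H2. apply (is_derive_plus f g x a b H1 H2). Qed.

Lemma cder_mult f g t a b : cder f t a -> cder g t b ->
  cder (fun s => Cmult (f s) (g s)) t (Cplus (Cmult a (g t)) (Cmult (f t) b)).
Proof.
  intros [H1 H2] [H3 H4]; split; simpl.
  - eapply is_derive_eq.
    + apply Rderive_minus; apply Rderive_mult; eauto.
    + destruct a, b; simpl; ring.
  - eapply is_derive_eq.
    + apply Rderive_plus; apply Rderive_mult; eauto.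
    + destruct a, b; simpl; ring.
Qed.

Lemma cder_R (f : R -> R) t l : is_derive f t l -> cder (fun s => RtoC (f s)) t (RtoC l).
Proof. intros H; split; simpl; auto. apply Rderive_const. Qed.

Lemma cder_sum (f : nat -> R -> C) (d : nat -> C) t K :
  (forall k, (k <= K)%nat -> cder (f k) t (d k)) ->
  cder (fun s => sum_n (fun k => f k s) K) t (sum_n d K).
Proof.
  induction K; intros H.
  - rewrite sum_OC. apply (cder_ext (f 0%nat)). intro; rewrite sum_OC; auto. apply H; lia.
  - rewrite sum_SnC. apply (cder_ext (fun s => Cplus (sum_n (fun k => f k s) K) (f (S K) s))).
    + intro; rewrite sum_SnC; auto.
    + apply cder_plus; auto.
Qed.

Lemma cder_Apol g w t K : cder (fun s => Apol g w s K) t (Adpol g w t K).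
Proof.
  unfold Apol, Adpol. apply cder_sum. intros k _.
  apply (cder_ext (fun s => Cmult (RtoC (gcoef g k * s ^ k)) (Cpow w k))).
  { intro s. rewrite RtoC_mult, RtoC_pow. auto. }
  eapply cder_eq.
  - apply cder_mult. apply cder_R. apply is_derive_scal.
    apply is_derive_pow. apply is_derive_id. apply cder_const.
  - replace (Init.Nat.pred k) with (k-1)%nat by lia.
    change (one : R) with 1.
    rewrite <- RtoC_pow. rewrite !RtoC_mult. ring.
Qed.

Definition mfun (w : C) t := (1 - t * fst w)^2 + (t * snd w)^2.
Definition thfun (w : C) t := atan (- (t * snd w) / (1 - t * fst w)).
Definition Efun g (w : C) t : C :=
  (exp (- g / 2 * ln (mfun w t)) * cos (g * thfun w t),
   - (exp (- g / 2 * ln (mfun w t)) * sin (g * thfun w t))).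

Lemma cder_E g w t : 1 - t * fst w > 0 ->
  cder (Efun g w) t (Cmult (Efun g w t) (Cmult (RtoC g) (Cmult w (Cinv (Cminus 1 (Cmult (RtoC t) w)))))).
Proof.
  destruct w as [a b]. simpl. intros Hp.
  assert (Hm : 0 < (1 - t*a)^2 + (t*b)^2) by nra.
  unfold cder, Efun, mfun, thfun; simpl; split.
  - auto_derive.
    + repeat split; try nra; lra.
    + unfold Cinv, Cminus, Cmult, Copp, Cplus; simpl.
      set (E := exp _). set (c := cos _). set (s := sin _).
      field. repeat split; try nra; try lra.
  - auto_derive.
    + repeat split; try nra; lra.
    + unfold Cinv, Cminus, Cmult, Copp, Cplus; simpl.
      set (E := exp _). set (c := cos _). set (s := sin _).
      field. repeat split; try nra; try lra.
Qed.

Lemma Cmod_le_sum (x : C) : Cmod x <= Rabs (fst x) + Rabs (snd x).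
Proof.
  destruct x as [p q]; unfold Cmod; simpl.
  rewrite <- (sqrt_Rsqr (Rabs p + Rabs q)) by (pose proof (Rabs_pos p); pose proof (Rabs_pos q); lra).
  apply sqrt_le_1_alt. unfold Rsqr.
  pose proof (Rabs_pos p); pose proof (Rabs_pos q).
  rewrite !Rmult_1_r.
  assert (p*p = Rabs p * Rabs p) by (rewrite <- Rabs_mult; rewrite Rabs_right; nra).
  assert (q*q = Rabs q * Rabs q) by (rewrite <- Rabs_mult; rewrite Rabs_right; nra).
  nra.
Qed.

Lemma fst_le_Cmod (x : C) : Rabs (fst x) <= Cmod x.
Proof. apply re_le_Cmod. Qed.

Lemma snd_le_Cmod (x : C) : Rabs (snd x) <= Cmod x.
Proof.
  destruct x as [p q]; unfold Cmod; simpl.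
  rewrite <- sqrt_Rsqr_abs. apply sqrt_le_1_alt. unfold Rsqr. nra.
Qed.

Lemma cmvt (f f' : R -> C) B :
  (forall s, 0 <= s <= 1 -> cder f s (f' s)) ->
  (forall s, 0 <= s <= 1 -> Cmod (f' s) <= B) ->
  Cmod (Cminus (f 1) (f 0)) <= 2 * B.
Proof.
  intros Hd Hb.
  assert (H1 : exists c, 0 <= c /\ c <= 1 /\ fst (f 1) = fst (f 0) + fst (f' c) * (1 - 0)).
  { apply (MVT_cor3 (fun s => fst (f s)) (fun s => fst (f' s))); [lra|].
    intros x Ha Hb'. apply is_derive_Reals. apply (proj1 (Hd x (conj Ha Hb'))). }
  assert (H2 : exists c, 0 <= c /\ c <= 1 /\ snd (f 1) = snd (f 0) + snd (f' c) * (1 - 0)).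
  { apply (MVT_cor3 (fun s => snd (f s)) (fun s => snd (f' s))); [lra|].
    intros x Ha Hb'. apply is_derive_Reals. apply (proj2 (Hd x (conj Ha Hb'))). }
  destruct H1 as [c1 [Hc1 [Hc1' E1]]]. destruct H2 as [c2 [Hc2 [Hc2' E2]]].
  eapply Rle_trans. apply Cmod_le_sum.
  destruct (f 1) as [x1 y1], (f 0) as [x0 y0]. simpl in *.
  replace (x1 + - x0) with (fst (f' c1)) by lra.
  replace (y1 + - y0) with (snd (f' c2)) by lra.
  pose proof (fst_le_Cmod (f' c1)). pose proof (snd_le_Cmod (f' c2)).
  pose proof (Hb c1 (conj Hc1 Hc1')). pose proof (Hb c2 (conj Hc2 Hc2')).
  lra.
Qed.

Definition Pw g (w : C) : C :=
  (exp (g / 2 * ln (mfun w 1)) * cos (g * thfun w 1),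
   exp (g / 2 * ln (mfun w 1)) * sin (g * thfun w 1)).

Lemma Efun_Pw g w : Cmult (Efun g w 1) (Pw g w) = 1.
Proof.
  unfold Efun, Pw, Cmult; simpl.
  set (L := ln (mfun w 1)). set (th := thfun w 1).
  assert (exp (- g / 2 * L) * exp (g / 2 * L) = 1).
  { rewrite <- exp_plus. replace (- g / 2 * L + g / 2 * L) with 0 by field. apply exp_0. }
  pose proof (sin2_cos2 (g * th)). unfold Rsqr in *.
  apply injective_projections; simpl; nra.
Qed.

Lemma Efun_0 g w : Efun g w 0 = 1.
Proof.
  unfold Efun, mfun, thfun. replace ((1 - 0 * fst w) ^ 2 + (0 * snd w) ^ 2) with 1 by ring.
  rewrite ln_1. replace (- (0 * snd w) / (1 - 0 * fst w)) with 0 by field.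
  rewrite atan_0, Rmult_0_r, Rmult_0_r, exp_0, cos_0, sin_0.
  apply injective_projections; simpl; ring.
Qed.

Lemma Apol_0 g w K : Apol g w 0 K = RtoC (gcoef g 0).
Proof.
  unfold Apol. induction K.
  - rewrite sum_OC. simpl. ring.
  - rewrite sum_SnC, IHK. simpl. ring.
Qed.

Lemma Cmod_Efun g w t : Cmod (Efun g w t) = exp (- g / 2 * ln (mfun w t)).
Proof.
  unfold Efun, Cmod; simpl.
  set (E := exp _). set (th := g * thfun w t).
  pose proof (sin2_cos2 th). unfold Rsqr in *.
  match goal with |- sqrt ?X = _ => replace X with (E * E) by nra end.
  apply sqrt_square. unfold E; left; apply exp_pos.
Qed.

Lemma mfun_Cmod w t : mfun w t = Cmod (Cminus 1 (Cmult (RtoC t) w)) ^ 2.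
Proof.
  unfold mfun, Cmod. rewrite pow2_sqrt.
  - destruct w; simpl; ring.
  - destruct w; simpl. apply Rplus_le_le_0_compat; rewrite Rmult_1_r; apply Rle_0_sqr.
Qed.

Lemma Cmod_p_lower w t : 0 <= t <= 1 -> 1 - t * Cmod w <= Cmod (Cminus 1 (Cmult (RtoC t) w)).
Proof.
  intros Ht.
  pose proof (Cmod_triangle (Cminus 1 (Cmult (RtoC t) w)) (Cmult (RtoC t) w)).
  replace (Cplus (Cminus 1 (Cmult (RtoC t) w)) (Cmult (RtoC t) w)) with (RtoC 1) in H by ring.
  rewrite Cmod_1, Cmod_mult, Cmod_R, Rabs_right in H by lra. lra.
Qed.

Lemma exp_le_exp x y : x <= y -> exp x <= exp y.
Proof. intros [H|H]; [left; apply exp_increasing; auto| subst; lra]. Qed.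

Definition CEb g r := exp (- g / 2 * ln ((1 - r) ^ 2)).

Lemma Efun_bound g w t : 0 < g -> Cmod w < 1 -> 0 <= t <= 1 ->
  Cmod (Efun g w t) <= CEb g (Cmod w).
Proof.
  intros Hg Hw Ht. rewrite Cmod_Efun. unfold CEb.
  apply exp_le_exp.
  pose proof (Cmod_p_lower w t Ht).
  pose proof (Cmod_ge_0 w).
  assert (0 < 1 - Cmod w) by lra.
  assert ((1 - Cmod w) ^ 2 <= mfun w t).
  { rewrite mfun_Cmod. apply pow_incr. split; [lra|]. nra. }
  assert (ln ((1 - Cmod w)^2) <= ln (mfun w t)).
  { apply ln_le; auto. apply pow_lt; auto. }
  assert (- g / 2 < 0) by lra. nra.
Qed.

Lemma fst_lt w t : Cmod w < 1 -> 0 <= t <= 1 -> 1 - t * fst w > 0.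
Proof.
  intros Hw Ht. pose proof (fst_le_Cmod w). pose proof (Rle_abs (fst w)).
  assert (t * fst w <= t * Rabs (fst w)) by (apply Rmult_le_compat_l; lra).
  assert (t * Rabs (fst w) <= 1 * Rabs (fst w)) by (apply Rmult_le_compat_r; [apply Rabs_pos|lra]).
  lra.
Qed.

Lemma p_nz w t : Cmod w < 1 -> 0 <= t <= 1 -> Cminus 1 (Cmult (RtoC t) w) <> 0.
Proof.
  intros Hw Ht E. pose proof (Cmod_p_lower w t Ht). rewrite E, Cmod_0 in H.
  pose proof (Cmod_ge_0 w). nra.
Qed.

Definition Rres g w K t : C :=
  Cmult (Cmult (Copp (RtoC (INR (S K) * gcoef g (S K)))) (Cpow w (S K))) (Cpow (RtoC t) K).

Lemma cder_Q g w K t : Cmod w < 1 -> 0 <= t <= 1 ->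
  cder (fun s => Cmult (Apol g w s K) (Efun g w s)) t
       (Cmult (Efun g w t) (Cmult (Rres g w K t) (Cinv (Cminus 1 (Cmult (RtoC t) w))))).
Proof.
  intros Hw Ht.
  eapply cder_eq.
  - apply cder_mult. apply cder_Apol. apply cder_E. apply fst_lt; auto.
  - unfold Rres. rewrite <- resid.
    pose proof (p_nz w t Hw Ht).
    field. auto.
Qed.

Lemma Rres_bound g w K t : 0 < g < 1 -> 0 <= t <= 1 ->
  Cmod (Rres g w K t) <= INR (S K) * Cmod w ^ (S K).
Proof.
  intros Hg Ht. unfold Rres.
  rewrite !Cmod_mult, Cmod_opp, !Cmod_pow, !Cmod_R.
  rewrite Rabs_mult. rewrite (Rabs_right (INR (S K))) by (apply Rle_ge, pos_INR).
  rewrite (Rabs_right t) by lra.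
  pose proof (gcoef_bound g (S K) Hg). pose proof (pos_INR (S K)).
  pose proof (pow_le (Cmod w) (S K) (Cmod_ge_0 w)).
  assert (t ^ K <= 1) by (rewrite <- (pow1 K); apply pow_incr; lra).
  assert (0 <= t ^ K) by (apply pow_le; lra).
  pose proof (Rabs_pos (gcoef g (S K))).
  set (A := INR (S K)) in *. set (B := Cmod w ^ S K) in *. set (G := Rabs _) in *.
  assert (0 <= A * B) by nra.
  assert (G * (t ^ K) <= 1) by nra.
  assert (0 <= G * t ^ K) by nra.
  replace (A * G * B * t ^ K) with ((A * B) * (G * t ^ K)) by ring. nra.
Qed.

Lemma Apol_approx g w K : 0 < g < 1 -> Cmod w < 1 ->
  Cmod (Cminus (Apol g w 1 K) (Pw g w)) <=
  2 * (CEb g (Cmod w) * (INR (S K) * Cmod w ^ S K) * / (1 - Cmod w)) * Cmod (Pw g w).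
Proof.
  intros Hg Hw.
  pose proof (Cmod_ge_0 w) as Hr0.
  assert (HB : Cmod (Cminus (Cmult (Apol g w 1 K) (Efun g w 1)) (Cmult (Apol g w 0 K) (Efun g w 0)))
     <= 2 * (CEb g (Cmod w) * (INR (S K) * Cmod w ^ S K) * / (1 - Cmod w))).
  { apply (cmvt (fun s => Cmult (Apol g w s K) (Efun g w s))
                (fun t => Cmult (Efun g w t) (Cmult (Rres g w K t) (Cinv (Cminus 1 (Cmult (RtoC t) w)))))).
    - intros s Hs. apply cder_Q; auto.
    - intros s Hs. rewrite !Cmod_mult. rewrite Cmod_inv by (apply p_nz; auto).
      pose proof (Efun_bound g w s (proj1 Hg) Hw Hs).
      pose proof (Rres_bound g w K s Hg Hs).
      pose proof (Cmod_p_lower w s Hs).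
      assert (1 - Cmod w <= 1 - s * Cmod w) by nra.
      assert (/ Cmod (Cminus 1 (Cmult (RtoC s) w)) <= / (1 - Cmod w)).
      { apply Rinv_le_contravar; lra. }
      pose proof (Cmod_ge_0 (Efun g w s)). pose proof (Cmod_ge_0 (Rres g w K s)).
      assert (0 <= / Cmod (Cminus 1 (Cmult (RtoC s) w))).
      { left; apply Rinv_0_lt_compat; lra. }
      rewrite <- Rmult_assoc.
      apply Rmult_le_compat; try lra.
      + apply Rmult_le_pos; lra.
      + apply Rmult_le_compat; lra. }
  rewrite Apol_0, Efun_0, gcoef_0 in HB.
  replace (Cminus (Apol g w 1 K) (Pw g w)) with
     (Cmult (Cminus (Cmult (Apol g w 1 K) (Efun g w 1)) (Cmult (RtoC 1) 1)) (Pw g w)).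
  - rewrite Cmod_mult. apply Rmult_le_compat_r. apply Cmod_ge_0. auto.
  - pose proof (Efun_Pw g w).
    transitivity (Cminus (Cmult (Apol g w 1 K) (Cmult (Efun g w 1) (Pw g w))) (Pw g w)).
    + ring.
    + rewrite H. ring.
Qed.


Lemma sum_n_extC (a b : nat -> C) N : (forall n, (n <= N)%nat -> a n = b n) -> sum_n a N = sum_n b N.
Proof. apply sum_n_ext_loc. Qed.

Lemma sum_n_plusC (a b : nat -> C) N : sum_n (fun k => Cplus (a k) (b k)) N = Cplus (sum_n a N) (sum_n b N).
Proof. induction N. - rewrite !sum_OC; auto. - rewrite !sum_SnC, IHN. cring. Qed.

Lemma sum_n_minusC (a b : nat -> C) N : sum_n (fun k => Cminus (a k) (b k)) N = Cminus (sum_n a N) (sum_n b N).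
Proof. induction N. - rewrite !sum_OC; auto. - rewrite !sum_SnC, IHN. cring. Qed.

Lemma sum_n_multlC (c : C) (a : nat -> C) N : sum_n (fun k => Cmult c (a k)) N = Cmult c (sum_n a N).
Proof. induction N. - rewrite !sum_OC; auto. - rewrite !sum_SnC, IHN. cring. Qed.

Lemma sum_n_multrC (c : C) (a : nat -> C) N : sum_n (fun k => Cmult (a k) c) N = Cmult (sum_n a N) c.
Proof. induction N. - rewrite !sum_OC; auto. - rewrite !sum_SnC, IHN. cring. Qed.

Lemma sum_n_RtoC (a : nat -> R) N : RtoC (sum_n a N) = sum_n (fun k => RtoC (a k)) N.
Proof.
  induction N.
  - rewrite !sum_O; auto.
  - rewrite sum_Sn, sum_SnC, <- IHN.
    change (plus (sum_n a N) (a (S N))) with (sum_n a N + a (S N)). apply RtoC_plus.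
Qed.

Lemma sum_n_zeroC (a : nat -> C) N : (forall n, (n <= N)%nat -> a n = RtoC 0) -> sum_n a N = RtoC 0.
Proof. induction N; intros H. rewrite sum_OC; auto. rewrite sum_SnC, IHN, H; auto. cring. Qed.

Lemma Cmod_sum_n (a : nat -> C) N : Cmod (sum_n a N) <= sum_n (fun k => Cmod (a k)) N.
Proof.
  induction N. rewrite sum_OC, sum_O; lra.
  rewrite sum_SnC, sum_Sn. eapply Rle_trans. apply Cmod_triangle.
  change (plus (sum_n (fun k => Cmod (a k)) N) (Cmod (a (S N)))) with
    (sum_n (fun k => Cmod (a k)) N + Cmod (a (S N))). lra.
Qed.

Lemma sum_n_leR (a b : nat -> R) N : (forall n, (n <= N)%nat -> a n <= b n) -> sum_n a N <= sum_n b N.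
Proof.
  induction N; intros H. rewrite !sum_O; auto.
  rewrite !sum_Sn. change (plus (sum_n a N) (a (S N))) with (sum_n a N + a (S N)).
  change (plus (sum_n b N) (b (S N))) with (sum_n b N + b (S N)).
  pose proof (H (S N) (le_n _)). assert (sum_n a N <= sum_n b N) by (apply IHN; auto). lra.
Qed.

Lemma sum_n_constR (c : R) N : sum_n (fun _ => c) N = INR (S N) * c.
Proof. apply sum_n_const. Qed.

Lemma triangle_sum (f : nat -> nat -> C) K :
  sum_n (fun m => sum_n (fun k => f k (m - k)%nat) m) K =
  sum_n (fun j => sum_n (fun i => f j i) (K - j)) K.
Proof.
  induction K.
  - rewrite !sum_OC. reflexivity.
  - rewrite sum_SnC, IHK. rewrite (sum_SnC (fun j => sum_n (fun i => f j i) (S K - j))).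
    replace (S K - S K)%nat with 0%nat by lia. rewrite sum_OC.
    rewrite (sum_n_extC (fun j => sum_n (fun i => f j i) (S K - j))
       (fun j => Cplus (sum_n (fun i => f j i) (K - j)) (f j (S K - j)%nat))).
    2: { intros n Hn. replace (S K - n)%nat with (S (K - n)) by lia. rewrite sum_SnC.
         repeat f_equal; lia. }
    rewrite sum_n_plusC. rewrite sum_SnC. replace (S K - S K)%nat with 0%nat by lia. cring.
Qed.


Definition Lsum g (w : C) K : C :=
  sum_n (fun m => Cmult (RtoC (sum_f_R0 (fun k => / 3 ^ k * gcoef g k * gcoef g (m - k)) m)) (Cpow w m)) K.

Definition ff g (w : C) (j i : nat) : C := Cmult (RtoC (/ 3 ^ j * gcoef g j * gcoef g i)) (Cpow w (j + i)).

Lemma Lsum_tri g w K : Lsum g w K = sum_n (fun j => sum_n (fun i => ff g w j i) (K - j)) K.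
Proof.
  rewrite <- triangle_sum. unfold Lsum. apply sum_n_extC. intros m Hm.
  rewrite <- sum_n_Reals. rewrite sum_n_RtoC. rewrite <- sum_n_multrC.
  apply sum_n_extC. intros k Hk. unfold ff. f_equal. f_equal. lia.
Qed.

Lemma Apol_1 g w K : Apol g w 1 K = sum_n (fun k => Cmult (RtoC (gcoef g k)) (Cpow w k)) K.
Proof. unfold Apol. apply sum_n_extC. intros. rewrite Cpow_1_l. cring. Qed.

Lemma Cpow_w3 (w : C) j : Cpow (Cmult w (RtoC (/ 3))) j = Cmult (Cpow w j) (RtoC (/ 3 ^ j)).
Proof.
  rewrite Cpow_mult_l. f_equal. rewrite <- RtoC_pow. f_equal. rewrite pow_inv. auto.
Qed.

Lemma prod_full g w K :
  Cmult (Apol g (Cmult w (RtoC (/3))) 1 K) (Apol g w 1 K) =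
  sum_n (fun j => sum_n (fun i => ff g w j i) K) K.
Proof.
  rewrite !Apol_1. rewrite <- sum_n_multrC. apply sum_n_extC. intros j Hj.
  rewrite <- sum_n_multlC. apply sum_n_extC. intros i Hi. unfold ff.
  rewrite Cpow_w3, Cpow_add_r. rewrite !RtoC_mult. cring.
Qed.

Lemma sum_split_ind (a : nat -> C) n K : (n <= K)%nat ->
  sum_n a K = Cplus (sum_n a n) (sum_n (fun i => if Nat.ltb n i then a i else RtoC 0) K).
Proof.
  induction K; intros H.
  - replace n with 0%nat by lia. rewrite !sum_OC. simpl. cring.
  - destruct (Nat.eq_dec n (S K)) as [E|E].
    + subst n. rewrite (sum_n_zeroC (fun i => if Nat.ltb (S K) i then a i else RtoC 0)).
      rewrite Cplus_0_r; reflexivity. intros m Hm. destruct (Nat.ltb_spec (S K) m); auto; lia.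
    + rewrite sum_SnC, IHK by lia. rewrite (sum_SnC (fun i => if Nat.ltb n i then a i else RtoC 0)).
      cbv beta. destruct (Nat.ltb_spec n (S K)); [|lia]. rewrite Cplus_assoc; reflexivity.
Qed.

Lemma pow_le_mono_r r a b : 0 <= r <= 1 -> (a <= b)%nat -> r ^ b <= r ^ a.
Proof.
  intros Hr Hab. replace b with (a + (b - a))%nat by lia. rewrite pow_add.
  pose proof (pow_le r a (proj1 Hr)).
  assert (r ^ (b - a) <= 1) by (rewrite <- (pow1 (b - a)); apply pow_incr; lra).
  assert (0 <= r ^ (b-a)) by (apply pow_le; lra). nra.
Qed.

Lemma ff_bound g w j i : 0 < g < 1 -> Cmod (ff g w j i) <= Cmod w ^ (j + i).
Proof.
  intros Hg. unfold ff. rewrite Cmod_mult, Cmod_R, Cmod_pow.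
  rewrite !Rabs_mult. rewrite Rabs_inv. rewrite Rabs_right by (apply Rle_ge, pow_le; lra).
  pose proof (gcoef_bound g j Hg). pose proof (gcoef_bound g i Hg).
  assert (1 <= 3 ^ j) by (rewrite <- (pow1 j); apply pow_incr; lra).
  assert (/ 3 ^ j <= 1) by (rewrite <- Rinv_1; apply Rinv_le_contravar; lra).
  assert (0 < / 3 ^ j) by (apply Rinv_0_lt_compat; lra).
  pose proof (pow_le (Cmod w) (j + i) (Cmod_ge_0 w)).
  pose proof (Rabs_pos (gcoef g j)). pose proof (Rabs_pos (gcoef g i)).
  set (A := / 3 ^ j) in *. set (B := Rabs (gcoef g j)) in *. set (D := Rabs (gcoef g i)) in *.
  assert (A * B <= 1) by nra. assert (0 <= A * B) by nra.
  assert (A * B * D <= 1) by nra. assert (0 <= A * B * D) by nra. nra.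
Qed.

Lemma Cminus_plus_l (a b : C) : Cminus (Cplus a b) a = b.
Proof. ring. Qed.

Lemma prod_conv g w K : 0 < g < 1 -> Cmod w <= 1 ->
  Cmod (Cminus (Cmult (Apol g (Cmult w (RtoC (/3))) 1 K) (Apol g w 1 K)) (Lsum g w K))
  <= INR (S K) * (INR (S K) * Cmod w ^ S K).
Proof.
  intros Hg Hw. pose proof (Cmod_ge_0 w) as Hr.
  rewrite prod_full, Lsum_tri, <- sum_n_minusC.
  eapply Rle_trans. apply Cmod_sum_n.
  rewrite <- sum_n_constR. apply sum_n_leR. intros j Hj.
  rewrite (sum_split_ind (fun i => ff g w j i) (K - j) K) by lia.
  rewrite Cminus_plus_l.
  eapply Rle_trans. apply Cmod_sum_n.
  rewrite <- sum_n_constR. apply sum_n_leR. intros i Hi.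
  destruct (Nat.ltb_spec (K - j) i).
  - eapply Rle_trans. apply ff_bound; auto. apply pow_le_mono_r. lra. lia.
  - rewrite Cmod_0. apply pow_le. auto.
Qed.

Lemma cos_pos_half s : -(PI/2) < s < PI/2 -> 0 < cos s.
Proof. intros; apply cos_gt_0; lra. Qed.

Lemma tan_le g s : 0 < g < 1 -> 0 <= s < PI/2 -> sin (g * s) / cos (g * s) <= sin s / cos s.
Proof.
  intros Hg Hs. pose proof PI_RGT_0.
  destruct (Req_dec s 0) as [->|Hs0].
  - rewrite Rmult_0_r, sin_0, cos_0. lra.
  - assert (g * s < s) by nra.
    assert (0 <= g * s) by nra.
    left. change (tan (g*s) < tan s). apply tan_increasing; lra.
Qed.

Lemma cos_pow g a : 0 < g < 1 -> 0 <= a < PI/2 -> exp (g * ln (cos a)) <= cos (g * a).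
Proof.
  intros Hg Ha. pose proof PI_RGT_0.
  destruct (Req_dec a 0) as [->|Ha0].
  - rewrite Rmult_0_r, cos_0, ln_1, Rmult_0_r, exp_0; lra.
  assert (Hd : forall s, 0 <= s -> s <= a ->
     derivable_pt_lim (fun s => g * ln (cos s) - ln (cos (g * s))) s
        (g * (- sin s / cos s) - (- g * sin (g * s) / cos (g * s)))).
  { intros s H1 H2. apply is_derive_Reals.
    assert (0 < cos s) by (apply cos_pos_half; lra).
    assert (0 < cos (g*s)) by (apply cos_pos_half; nra).
    auto_derive.
    - repeat split; lra.
    - field; lra. }
  destruct (MVT_cor3 _ _ 0 a ltac:(lra) Hd) as [c [Hc1 [Hc2 E]]].
  assert (0 < cos c) by (apply cos_pos_half; lra).
  assert (0 < cos (g*c)) by (apply cos_pos_half; nra).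
  assert (Hc3 : 0 <= c < PI/2) by lra. pose proof (tan_le g c Hg Hc3).
  assert (Hneg : g * (- sin c / cos c) - (- g * sin (g * c) / cos (g * c)) <= 0).
  { replace (g * (- sin c / cos c) - (- g * sin (g * c) / cos (g * c))) with
      (g * (sin (g*c)/cos (g*c) - sin c / cos c)) by (field; lra).
    assert (0 <= g) by lra. nra. }
  rewrite Rmult_0_r, cos_0, ln_1 in E.
  assert (HL : g * ln (cos a) <= ln (cos (g * a))) by nra.
  assert (0 < cos (g*a)) by (apply cos_pos_half; nra).
  rewrite <- (exp_ln (cos (g * a))) by auto.
  destruct HL as [HL|HL]; [left; apply exp_increasing; auto | rewrite HL; lra].
Qed.

Lemma atan_cs X Y : 0 < X ->
  cos (atan (Y / X)) = X / sqrt (X * X + Y * Y) /\ sin (atan (Y / X)) = Y / sqrt (X * X + Y * Y).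
Proof.
  intros HX.
  assert (HS : 0 < sqrt (X * X + Y * Y)) by (apply sqrt_lt_R0; nra).
  set (S := sqrt (X * X + Y * Y)) in *.
  assert (HSS : S * S = X * X + Y * Y) by (apply sqrt_sqrt; nra).
  assert (E : sqrt (1 + (Y / X)²) = S / X).
  { apply sqrt_lem_1.
    - unfold Rsqr. pose proof (Rle_0_sqr (Y/X)). unfold Rsqr in *. lra.
    - left; apply Rdiv_lt_0_compat; auto.
    - unfold Rsqr. replace (S / X * (S / X)) with ((S * S) / (X * X)) by (field; lra).
      rewrite HSS. field. lra. }
  rewrite cos_atan, sin_atan, E. split; field; lra.
Qed.

Lemma cos_nonneg_range a : - PI < a < PI -> 0 < cos a -> - (PI/2) < a < PI/2.
Proof.
  intros Ha Hc. pose proof PI_RGT_0.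
  split.
  - destruct (Rlt_le_dec (-(PI/2)) a) as [H1|H1]; auto.
    exfalso. rewrite <- cos_neg in Hc.
    destruct (Req_dec (-a) (PI/2)) as [E|E].
    + rewrite E, cos_PI2 in Hc; lra.
    + assert (cos (-a) < 0) by (apply cos_lt_0; lra). lra.
  - destruct (Rlt_le_dec a (PI/2)) as [H1|H1]; auto.
    exfalso.
    destruct (Req_dec a (PI/2)) as [E|E].
    + rewrite E, cos_PI2 in Hc; lra.
    + assert (cos a < 0) by (apply cos_lt_0; lra). lra.
Qed.

Lemma cos_nonneg_range2 a : - PI < a < PI -> 0 <= cos a -> - (PI/2) <= a <= PI/2.
Proof.
  intros Ha Hc. pose proof PI_RGT_0.
  split.
  - destruct (Rle_dec (-(PI/2)) a) as [H1|H1]; auto.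
    exfalso. rewrite <- cos_neg in Hc.
    assert (cos (-a) < 0) by (apply cos_lt_0; lra). lra.
  - destruct (Rle_dec a (PI/2)) as [H1|H1]; auto.
    exfalso. assert (cos a < 0) by (apply cos_lt_0; lra). lra.
Qed.

Lemma cos_pow_sym g a : 0 < g < 1 -> - (PI/2) < a < PI/2 -> exp (g * ln (cos a)) <= cos (g * a).
Proof.
  intros Hg Ha. destruct (Rle_dec 0 a).
  - apply cos_pow; lra.
  - rewrite <- (cos_neg a), <- (cos_neg (g * a)). replace (- (g * a)) with (g * (- a)) by ring.
    apply cos_pow; lra.
Qed.

Lemma exp_le_exp_local x y : x <= y -> exp x <= exp y.
Proof. intros [H|H]; [left; apply exp_increasing; auto| subst; lra]. Qed.

Lemma re_lower g w x : 0 < g < 1 -> Cmod w < 1 -> Cmod w <= x <= 1 ->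
  rpow ((1 - x) * (3 - x) / 2) g <=
  fst (Cmult (RtoC (rpow (3/2) g)) (Cmult (Pw g w) (Pw g (Cmult w (RtoC (/3)))))).
Proof.
  intros Hg Hw Hx. pose proof PI_RGT_0 as HPI.
  pose proof (Cmod_ge_0 w) as Hr0.
  destruct w as [a b].
  set (r := Cmod (a, b)) in *.
  assert (Hr2 : r * r = a * a + b * b).
  { unfold r, Cmod; simpl. rewrite sqrt_sqrt; [ring|nra]. }
  assert (Ha : a <= r /\ - a <= r) by (split; nra).
  set (X1 := 1 - a). set (Y1 := - b). set (X3 := 1 - a / 3). set (Y3 := - b / 3).
  assert (HX1 : 0 < X1) by (unfold X1; lra).
  assert (HX3 : 0 < X3) by (unfold X3; lra).
  assert (Em1 : mfun (a, b) 1 = X1 * X1 + Y1 * Y1) by (unfold mfun, X1, Y1; simpl; ring).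
  assert (Em3 : mfun (Cmult (a, b) (RtoC (/ 3))) 1 = X3 * X3 + Y3 * Y3)
    by (unfold mfun, X3, Y3; simpl; field).
  assert (Et1 : thfun (a, b) 1 = atan (Y1 / X1)) by (unfold thfun, X1, Y1; simpl; f_equal; field; lra).
  assert (Et3 : thfun (Cmult (a, b) (RtoC (/ 3))) 1 = atan (Y3 / X3))
    by (unfold thfun, X3, Y3; simpl; f_equal; field; lra).
  destruct (atan_cs X1 Y1 HX1) as [C1 S1].
  destruct (atan_cs X3 Y3 HX3) as [C3 S3].
  pose proof (atan_bound (Y1 / X1)). pose proof (atan_bound (Y3 / X3)).
  set (a1 := atan (Y1 / X1)) in *. set (a3 := atan (Y3 / X3)) in *.
  set (m1 := X1 * X1 + Y1 * Y1) in *. set (m3 := X3 * X3 + Y3 * Y3) in *.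
  assert (Hm1 : 0 < m1) by (unfold m1; nra). assert (Hm3 : 0 < m3) by (unfold m3; nra).
  assert (HS1 : 0 < sqrt m1) by (apply sqrt_lt_R0; auto).
  assert (HS3 : 0 < sqrt m3) by (apply sqrt_lt_R0; auto).
  set (ReZ := X1 * X3 - Y1 * Y3).
  assert (Hcos : cos (a1 + a3) = ReZ / (sqrt m1 * sqrt m3)).
  { rewrite cos_plus, C1, C3, S1, S3. unfold ReZ. field. lra. }
  assert (HReZ : (1 - r) * (1 - r / 3) <= ReZ).
  { unfold ReZ, X1, X3, Y1, Y3. nra. }
  set (Z := (1 - x) * (1 - x / 3)).
  assert (HZ : 0 <= Z) by (unfold Z; nra).
  assert (HZr : Z <= (1 - r) * (1 - r / 3)) by (unfold Z; nra).
  unfold Pw. rewrite Em1, Em3, Et1, Et3. fold a1 a3 m1 m3.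
  set (E1 := exp (g / 2 * ln m1)). set (E3 := exp (g / 2 * ln m3)).
  assert (HE : E1 * E3 = exp (g * ln (sqrt m1 * sqrt m3))).
  { unfold E1, E3. rewrite <- exp_plus. f_equal.
    rewrite ln_mult by auto.
    rewrite <- (sqrt_sqrt m1) at 1 by lra. rewrite <- (sqrt_sqrt m3) at 1 by lra.
    rewrite !ln_mult by auto. field. }
  assert (Hcg : rpow (3/2) g = exp (g * ln (3/2))).
  { unfold rpow. destruct (Req_EM_T (3/2) 0); [lra|]. reflexivity. }
  simpl. rewrite Hcg.
  replace (exp (g * ln (3 / 2)) * (E1 * cos (g * a1) * (E3 * cos (g * a3)) - E1 * sin (g * a1) * (E3 * sin (g * a3))) - 0 * (E1 * cos (g * a1) * (E3 * sin (g * a3)) + E1 * sin (g * a1) * (E3 * cos (g * a3))))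
    with (exp (g * ln (3 / 2)) * (E1 * E3) * cos (g * (a1 + a3)))
    by (rewrite Rmult_plus_distr_l, cos_plus; ring).
  rewrite HE.
  assert (Hc0 : 0 <= cos (a1 + a3)).
  { rewrite Hcos. apply Rdiv_le_0_compat; nra. }
  pose proof (cos_nonneg_range2 (a1 + a3) ltac:(lra) Hc0) as Hrange.
  assert (Hcg0 : 0 <= cos (g * (a1 + a3))).
  { apply cos_ge_0; nra. }
  assert (Hpos : 0 < exp (g * ln (3 / 2)) * exp (g * ln (sqrt m1 * sqrt m3))).
  { apply Rmult_lt_0_compat; apply exp_pos. }
  unfold rpow. destruct (Req_EM_T ((1 - x) * (3 - x) / 2) 0) as [E0|E0].
  - nra.
  - assert (HZp : 0 < Z) by (unfold Z in *; destruct HZ; auto; exfalso; apply E0; nra).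
    assert (Hcpos : 0 < cos (a1 + a3)).
    { rewrite Hcos. apply Rdiv_lt_0_compat; nra. }
    pose proof (cos_nonneg_range (a1 + a3) ltac:(lra) Hcpos) as Hr'.
    pose proof (cos_pow_sym g (a1 + a3) Hg Hr') as Hcp.
    unfold Rpower.
    apply Rle_trans with (exp (g * ln (3 / 2)) * exp (g * ln (sqrt m1 * sqrt m3)) * exp (g * ln (cos (a1 + a3)))).
    2: { apply Rmult_le_compat_l; lra. }
    rewrite <- !exp_plus.
    assert (HZ2 : (1 - x) * (3 - x) / 2 = 3 / 2 * Z) by (unfold Z; field).
    rewrite HZ2.
    apply exp_le_exp_local.
    rewrite <- !Rmult_plus_distr_l. apply Rmult_le_compat_l; [lra|].
    rewrite <- !ln_mult by (try apply Rmult_lt_0_compat; lra).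
    rewrite <- (ln_mult (3 / 2 * (sqrt m1 * sqrt m3)) (cos (a1 + a3))) by (try apply Rmult_lt_0_compat; nra).
    apply ln_le. nra.
    rewrite Hcos. replace (3 / 2 * (sqrt m1 * sqrt m3) * (ReZ / (sqrt m1 * sqrt m3))) with (3/2 * ReZ)
      by (field; lra). nra.
Qed.

Definition ce (a : R) : C := (cos a, sin a).

Lemma ce_add a b : ce (a + b) = Cmult (ce a) (ce b).
Proof. unfold ce, Cmult; simpl. rewrite cos_plus, sin_plus. apply injective_projections; simpl; ring. Qed.

Lemma ce_conj a : Cconj (ce a) = ce (- a).
Proof. unfold ce, Cconj; simpl. rewrite cos_neg, sin_neg. reflexivity. Qed.

Lemma ce_0 : ce 0 = 1.
Proof. unfold ce. rewrite cos_0, sin_0. reflexivity. Qed.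

Lemma ce_pow a j : Cpow (ce a) j = ce (INR j * a).
Proof.
  induction j.
  - simpl. rewrite Rmult_0_l, ce_0. reflexivity.
  - rewrite Cpow_S, IHj, S_INR. replace ((INR j + 1) * a) with (a + INR j * a) by ring.
    rewrite ce_add. reflexivity.
Qed.

Lemma ce_2PI (p : nat) : ce (2 * PI * INR p) = 1.
Proof.
  unfold ce. replace (2 * PI * INR p) with (0 + 2 * INR p * PI) by ring.
  rewrite cos_period, sin_period, cos_0, sin_0. reflexivity.
Qed.

Lemma geom_C (w : C) L : Cmult (Cminus 1 w) (sum_n (fun j => Cpow w j) L) = Cminus 1 (Cpow w (S L)).
Proof.
  induction L.
  - rewrite sum_OC. simpl. ring.
  - rewrite sum_SnC. rewrite Cmult_plus_distr_l, IHL. rewrite (Cpow_S w (S L)). ring.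
Qed.

Lemma ce_ne1 phi : - (2 * PI) < phi < 2 * PI -> phi <> 0 -> ce phi <> 1.
Proof.
  intros Hp Hn E. unfold ce in E. injection E as E1 E2.
  pose proof PI_RGT_0.
  replace phi with (2 * (phi / 2)) in E1 by field.
  rewrite cos_2a_sin in E1.
  assert (sin (phi/2) = 0) by nra.
  destruct (Rlt_le_dec 0 phi).
  - assert (0 < sin (phi/2)) by (apply sin_gt_0; lra). lra.
  - assert (sin (phi/2) < 0) by (apply sin_lt_0_var; lra). lra.
Qed.

Definition thj (M j : nat) : R := 2 * PI * INR j / INR M.

Lemma ortho (L p n : nat) : (p <= L)%nat -> (n <= L)%nat ->
  sum_n (fun j => Cmult (ce (INR p * thj (S L) j)) (Cconj (ce (INR n * thj (S L) j)))) L
  = if Nat.eqb p n then RtoC (INR (S L)) else RtoC 0.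
Proof.
  intros Hp Hn. pose proof PI_RGT_0.
  assert (HM : 0 < INR (S L)) by (apply lt_0_INR; lia).
  set (phi := 2 * PI * (INR p - INR n) / INR (S L)).
  rewrite (sum_n_extC _ (fun j => Cpow (ce phi) j)).
  2: { intros j _. rewrite ce_conj, <- ce_add, ce_pow. f_equal. unfold phi, thj. field. lra. }
  destruct (Nat.eqb_spec p n).
  - subst. unfold phi. replace (2 * PI * (INR n - INR n) / INR (S L)) with 0 by (field; lra).
    rewrite ce_0. rewrite (sum_n_extC _ (fun _ => RtoC 1)) by (intros; apply Cpow_1_l).
    clear. induction L. rewrite sum_OC. reflexivity.
    rewrite sum_SnC, IHL. rewrite (S_INR (S L)). rewrite RtoC_plus. reflexivity.
  - assert (Hw : ce phi <> 1).
    { apply ce_ne1.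
      - unfold phi. assert (INR p <= INR L) by (apply le_INR; auto).
        assert (INR n <= INR L) by (apply le_INR; auto).
        pose proof (pos_INR p). pose proof (pos_INR n). rewrite S_INR in *.
        split.
        + apply Rmult_lt_reg_r with (INR L + 1); [lra|]. unfold Rdiv. rewrite Rmult_assoc, Rinv_l by lra. nra.
        + apply Rmult_lt_reg_r with (INR L + 1); [lra|]. unfold Rdiv. rewrite Rmult_assoc, Rinv_l by lra. nra.
      - unfold phi. intro E. apply n0. apply INR_eq.
        assert (2 * PI * (INR p - INR n) = 0).
        { apply Rmult_eq_reg_r with (/ INR (S L)). rewrite Rmult_0_l. exact E.
          apply Rinv_neq_0_compat; lra. }
        nra. }
    assert (HM1 : Cpow (ce phi) (S L) = 1).
    { rewrite ce_pow. unfold phi. replace (INR (S L) * (2 * PI * (INR p - INR n) / INR (S L)))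
        with (2 * PI * INR p + - (2 * PI * INR n)) by (field; lra).
      rewrite ce_add, <- ce_conj, !ce_2PI. apply injective_projections; simpl; ring. }
    pose proof (geom_C (ce phi) L) as G. rewrite HM1 in G.
    replace (Cminus 1 1) with (RtoC 0) in G by ring.
    assert (Hne : Cminus 1 (ce phi) <> 0) by (apply Cminus_eq_contra; auto).
    assert (Hz : forall S : C, Cmult (Cminus 1 (ce phi)) S = RtoC 0 -> S = RtoC 0).
    { intros S HS. transitivity (Cmult (Cinv (Cminus 1 (ce phi))) (Cmult (Cminus 1 (ce phi)) S)).
      + field. auto.
      + rewrite HS. ring. }
    apply Hz. exact G.
Qed.

Lemma sum_n_conj (a : nat -> C) N : Cconj (sum_n a N) = sum_n (fun k => Cconj (a k)) N.
Proof.
  induction N. rewrite !sum_OC; auto.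
  rewrite !sum_SnC, Cplus_conj, IHN. reflexivity.
Qed.

Lemma sum_delta (f : nat -> C) q N :
  sum_n (fun m => if Nat.eqb m q then f m else RtoC 0) N = if Nat.leb q N then f q else RtoC 0.
Proof.
  induction N.
  - rewrite sum_OC. destruct q; simpl; auto.
  - rewrite sum_SnC, IHN.
    destruct (Nat.eqb_spec (S N) q); destruct (Nat.leb_spec q N); destruct (Nat.leb_spec q (S N));
      try lia; subst; rewrite ?Cplus_0_r, ?Cplus_0_l; auto.
Qed.

Lemma sum_trunc (f : nat -> C) n K : (n <= K)%nat ->
  sum_n (fun k => if Nat.leb k n then f k else RtoC 0) K = sum_n f n.
Proof.
  intros H. rewrite (sum_split_ind _ n K H).
  rewrite (sum_n_zeroC (fun i => if Nat.ltb n i then (if Nat.leb i n then f i else RtoC 0) else RtoC 0)).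
  - rewrite Cplus_0_r. apply sum_n_extC. intros k Hk. destruct (Nat.leb_spec k n); auto; lia.
  - intros m _. destruct (Nat.ltb_spec n m); destruct (Nat.leb_spec m n); auto; lia.
Qed.

Definition Ssym (c : nat -> C) K (th : R) : C := sum_n (fun k => Cmult (c k) (ce (INR k * th))) K.
Definition Vsym (v : nat -> C) N (th : R) : C := sum_n (fun m => Cmult (v m) (ce (INR m * th))) N.
Definition Fsum (c v : nat -> C) N : C :=
  sum_n (fun n => Cmult (sum_n (fun k => Cmult (c k) (v (n - k)%nat)) n) (Cconj (v n))) N.


Lemma expand3 c v N K th :
  Cmult (Ssym c K th) (Cmult (Vsym v N th) (Cconj (Vsym v N th))) =
  sum_n (fun k => sum_n (fun m => sum_n (fun n =>
     Cmult (Cmult (Cmult (c k) (v m)) (Cconj (v n)))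
           (Cmult (ce (INR (k + m) * th)) (Cconj (ce (INR n * th))))) N) N) K.
Proof.
  unfold Ssym, Vsym. rewrite sum_n_conj.
  rewrite <- sum_n_multrC. apply sum_n_extC. intros k _.
  rewrite <- sum_n_multrC. rewrite <- sum_n_multlC. apply sum_n_extC. intros m _.
  rewrite <- sum_n_multlC. rewrite <- sum_n_multlC. apply sum_n_extC. intros n _.
  rewrite plus_INR, Rmult_plus_distr_r, ce_add, Cmult_conj. cring.
Qed.

Lemma toep_id c v N K : (N <= K)%nat ->
  sum_n (fun j => Cmult (Ssym c K (thj (S (K + N)) j))
     (Cmult (Vsym v N (thj (S (K + N)) j)) (Cconj (Vsym v N (thj (S (K + N)) j))))) (K + N)
  = Cmult (RtoC (INR (S (K + N)))) (Fsum c v N).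
Proof.
  intros HNK. set (L := (K + N)%nat).
  rewrite (sum_n_extC _ _ L (fun j _ => expand3 c v N K (thj (S L) j))).
  rewrite sum_n_switch.
  rewrite (sum_n_extC _ (fun k => sum_n (fun m => sum_n (fun n =>
      Cmult (Cmult (Cmult (c k) (v m)) (Cconj (v n)))
            (if Nat.eqb (k + m) n then RtoC (INR (S L)) else RtoC 0)) N) N) K).
  2: { intros k Hk. rewrite sum_n_switch. apply sum_n_extC. intros m Hm.
       rewrite sum_n_switch. apply sum_n_extC. intros n Hn.
       rewrite sum_n_multlC. rewrite ortho by (unfold L; lia). reflexivity. }
  rewrite (sum_n_extC _ (fun k => sum_n (fun n => sum_n (fun m =>
      Cmult (Cmult (Cmult (c k) (v m)) (Cconj (v n)))
            (if Nat.eqb (k + m) n then RtoC (INR (S L)) else RtoC 0)) N) N) K).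
  2: { intros k Hk. apply sum_n_switch. }
  rewrite sum_n_switch.
  unfold Fsum. rewrite <- sum_n_multlC. apply sum_n_extC. intros n Hn.
  rewrite (sum_n_extC _ (fun k => if Nat.leb k n then
      Cmult (RtoC (INR (S L))) (Cmult (Cmult (c k) (v (n - k)%nat)) (Cconj (v n))) else RtoC 0) K).
  2: { intros k Hk.
       destruct (Nat.leb_spec k n).
       - rewrite (sum_n_extC _ (fun m => if Nat.eqb m (n - k) then
             Cmult (RtoC (INR (S L))) (Cmult (Cmult (c k) (v m)) (Cconj (v n))) else RtoC 0) N).
         + rewrite sum_delta. destruct (Nat.leb_spec (n - k) N); [reflexivity|lia].
         + intros m Hm. destruct (Nat.eqb_spec (k + m) n); destruct (Nat.eqb_spec m (n - k)); try lia.
           * cring.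
           * rewrite Cmult_0_r. reflexivity.
       - apply sum_n_zeroC. intros m Hm. destruct (Nat.eqb_spec (k + m) n); try lia.
         rewrite Cmult_0_r. reflexivity. }
  rewrite sum_trunc by lia.
  rewrite <- sum_n_multrC. rewrite <- sum_n_multlC. apply sum_n_extC. intros k Hk. cring.
Qed.

Lemma fst_sum_n (a : nat -> C) N : fst (sum_n a N) = sum_n (fun k => fst (a k)) N.
Proof.
  induction N. rewrite sum_OC, sum_O; auto.
  rewrite sum_SnC, sum_Sn, <- IHN. reflexivity.
Qed.

Lemma fst_RtoC_mult a (z : C) : fst (Cmult (RtoC a) z) = a * fst z.
Proof. destruct z; simpl; ring. Qed.

Lemma sum_n_RmultL (a : R) (u : nat -> R) N : sum_n (fun k => a * u k) N = a * sum_n u N.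
Proof.
  induction N. rewrite !sum_O; auto.
  rewrite !sum_Sn, IHN. change (plus (a * sum_n u N) (a * u (S N)) = a * plus (sum_n u N) (u (S N))).
  unfold plus; simpl. ring.
Qed.

Lemma fst_mult_norm (S : C) x y : fst (Cmult S (Cmult (x, y) (Cconj (x, y)))) = fst S * (x * x + y * y).
Proof. destruct S; simpl; ring. Qed.

Definition delta0 (k : nat) : C := if Nat.eqb k 0 then RtoC 1 else RtoC 0.

Lemma Ssym_delta K th : Ssym delta0 K th = RtoC 1.
Proof.
  unfold Ssym. induction K.
  - rewrite sum_OC. unfold delta0. simpl. rewrite Rmult_0_l, ce_0. ring.
  - rewrite sum_SnC, IHK. unfold delta0. simpl. ring.
Qed.

Lemma toep_ineq c v N K eps : (N <= K)%nat -> 0 <= eps ->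
  (forall th, - eps <= fst (Ssym c K th)) ->
  - eps * fst (Fsum delta0 v N) <= fst (Fsum c v N).
Proof.
  intros HNK He HS.
  assert (HM : 0 < INR (S (K + N))) by (apply lt_0_INR; lia).
  pose proof (toep_id c v N K HNK) as E1.
  pose proof (toep_id delta0 v N K HNK) as E2.
  apply (f_equal fst) in E1. apply (f_equal fst) in E2.
  rewrite fst_sum_n in E1, E2. rewrite fst_RtoC_mult in E1, E2.
  apply Rmult_le_reg_l with (INR (S (K + N))); auto.
  rewrite <- E1.
  replace (INR (S (K + N)) * (- eps * fst (Fsum delta0 v N))) with (- eps * (INR (S (K + N)) * fst (Fsum delta0 v N))) by ring.
  rewrite <- E2.
  rewrite <- sum_n_RmultL.
  apply sum_n_leR. intros j _.
  set (th := thj (S (K + N)) j).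
  rewrite Ssym_delta.
  destruct (Vsym v N th) as [x y]. rewrite !fst_mult_norm.
  pose proof (HS th). simpl fst at 1. assert (0 <= x * x + y * y) by nra. nra.
Qed.

Lemma Fsum_delta_nonneg v N : 0 <= fst (Fsum delta0 v N).
Proof.
  unfold Fsum. rewrite fst_sum_n. apply Rle_trans with (sum_n (fun _ => 0) N).
  - rewrite sum_n_constR. lra.
  - apply sum_n_leR. intros n _.
    replace (sum_n (fun k => Cmult (delta0 k) (v (n - k)%nat)) n) with (v n).
    + destruct (v n) as [x y]; simpl. nra.
    + rewrite (sum_n_extC _ (fun k => if Nat.eqb k 0 then v (n - k)%nat else RtoC 0)).
      * rewrite sum_delta. simpl. rewrite Nat.sub_0_r. reflexivity.
      * intros k _. unfold delta0. destruct (Nat.eqb_spec k 0). subst. ring. ring.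
Qed.


Lemma exp_INR_mult a n : exp (INR n * a) = exp a ^ n.
Proof.
  induction n.
  - simpl. rewrite Rmult_0_l, exp_0. reflexivity.
  - rewrite S_INR, Rmult_plus_distr_r, Rmult_1_l, exp_plus, IHn. simpl. ring.
Qed.

Lemma Cmult_assoc_rev_local (a b c : C) : Cmult (Cmult a b) c = Cmult a (Cmult b c).
Proof. ring. Qed.

Definition cc g lam tau eta rho u (k : nat) : C :=
  Cmult (RtoC (l2mod g lam tau rho u k)) (cexpmJ (eta * u * INR k * tau)).

Definition CstL g lam tau : R :=
  rpow (sum_f_R0 (fun i => / INR (S i) * (1 - exp (- lam * tau)) ^ (S i)) 1) g.

Lemma Ssym_eq g lam tau eta rho u K th :
  Ssym (cc g lam tau eta rho u) K th =
  Cminus (Cmult (RtoC (rpow (3/2) g))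
           (Lsum g (Cmult (RtoC (exp (- (lam + rho * u) * tau))) (ce (th - eta * u * tau))) K))
         (RtoC (CstL g lam tau)).
Proof.
  set (y := exp (- (lam + rho * u) * tau)).
  set (w := Cmult (RtoC y) (ce (th - eta * u * tau))).
  unfold Ssym, Lsum. rewrite <- sum_n_multlC.
  transitivity (sum_n (fun k => Cminus (Cmult (RtoC (l2coef g k)) (Cpow w k))
                                        (if Nat.eqb k 0 then RtoC (CstL g lam tau) else RtoC 0)) K).
  - apply sum_n_extC. intros k _. unfold cc.
    assert (Hce : Cmult (cexpmJ (eta * u * INR k * tau)) (ce (INR k * th)) = ce (INR k * (th - eta * u * tau))).
    { unfold cexpmJ. replace (cos (eta * u * INR k * tau), - sin (eta * u * INR k * tau)) with
        (ce (- (eta * u * INR k * tau))) by (unfold ce; rewrite cos_neg, sin_neg; reflexivity).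
      rewrite <- ce_add. f_equal. ring. }
    destruct k.
    + simpl l2mod. simpl Nat.eqb. simpl Cpow.
      replace (INR 0 * th) with 0 by (simpl; ring). rewrite ce_0.
      unfold cexpmJ. replace (eta * u * INR 0 * tau) with 0 by (simpl; ring).
      rewrite cos_0, sin_0. unfold CstL. rewrite RtoC_minus.
      apply injective_projections; simpl; ring.
    + simpl Nat.eqb. unfold l2mod.
      rewrite Cmult_assoc_rev_local, Hce.
      unfold w. rewrite Cpow_mult_l, ce_pow, <- RtoC_pow.
      unfold y. rewrite <- exp_INR_mult.
      replace (- (lam + rho * u) * INR (S k) * tau) with (INR (S k) * (- (lam + rho * u) * tau)) by ring.
      rewrite RtoC_mult. cring.
  - rewrite sum_n_minusC. f_equal.
    + apply sum_n_extC. intros k _. unfold l2coef. rewrite RtoC_mult. cring.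
    + rewrite sum_delta. simpl. reflexivity.
Qed.

Lemma Apol_bound g w K : 0 < g < 1 -> Cmod w <= 1 -> Cmod (Apol g w 1 K) <= INR (S K).
Proof.
  intros Hg Hw. rewrite Apol_1. eapply Rle_trans. apply Cmod_sum_n.
  rewrite <- (Rmult_1_r (INR (S K))). rewrite <- sum_n_constR. apply sum_n_leR. intros k _.
  rewrite Cmod_mult, Cmod_R, Cmod_pow.
  pose proof (gcoef_bound g k Hg). pose proof (Rabs_pos (gcoef g k)).
  assert (Cmod w ^ k <= 1) by (rewrite <- (pow1 k); apply pow_incr; split; [apply Cmod_ge_0|auto]).
  pose proof (pow_le (Cmod w) k (Cmod_ge_0 w)). nra.
Qed.

Lemma Cmod_w3 w : Cmod (Cmult w (RtoC (/3))) = Cmod w / 3.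
Proof. rewrite Cmod_mult, Cmod_R, Rabs_right by lra. unfold Rdiv. reflexivity. Qed.

Definition Ctot g w : R :=
  1 + 2 * CEb g (Cmod w / 3) * / (1 - Cmod w / 3) * Cmod (Pw g (Cmult w (RtoC (/3))))
    + Cmod (Pw g (Cmult w (RtoC (/3)))) * (2 * CEb g (Cmod w) * / (1 - Cmod w) * Cmod (Pw g w)).

Lemma CEb_pos g r : 0 <= CEb g r.
Proof. unfold CEb. left; apply exp_pos. Qed.

Lemma Lsum_err g w K : 0 < g < 1 -> Cmod w < 1 ->
  Cmod (Cminus (Lsum g w K) (Cmult (Pw g w) (Pw g (Cmult w (RtoC (/3))))))
  <= Ctot g w * (INR (S K) ^ 2 * Cmod w ^ S K).
Proof.
  intros Hg Hw. pose proof (Cmod_ge_0 w) as Hr. set (r := Cmod w) in *.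
  set (A := Apol g (Cmult w (RtoC (/3))) 1 K). set (B := Apol g w 1 K).
  set (P1 := Pw g w). set (P3 := Pw g (Cmult w (RtoC (/3)))).
  assert (H1 : Cmod (Cminus (Cmult A B) (Lsum g w K)) <= INR (S K) * (INR (S K) * r ^ S K))
    by (apply prod_conv; auto; unfold r in *; lra).
  assert (Hw3 : Cmod (Cmult w (RtoC (/3))) < 1) by (rewrite Cmod_w3; unfold r in *; lra).
  assert (H2 := Apol_approx g (Cmult w (RtoC (/3))) K Hg Hw3). fold A P3 in H2. rewrite Cmod_w3 in H2. fold r in H2.
  assert (H3 := Apol_approx g w K Hg Hw). fold B P1 r in H3.
  assert (HB : Cmod B <= INR (S K)) by (apply Apol_bound; auto; unfold r in *; lra).
  assert (E : Cminus (Lsum g w K) (Cmult P1 P3) =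
     Cplus (Copp (Cminus (Cmult A B) (Lsum g w K)))
       (Cplus (Cmult (Cminus A P3) B) (Cmult P3 (Cminus B P1)))) by ring.
  rewrite E.
  eapply Rle_trans. apply Cmod_triangle.
  eapply Rle_trans. apply Rplus_le_compat_l. apply Cmod_triangle.
  rewrite Cmod_opp, !Cmod_mult.
  unfold Ctot. fold r P1 P3.
  set (n := INR (S K)) in *. set (q := r ^ S K) in *. set (q3 := (r / 3) ^ S K) in *.
  assert (Hn : 1 <= n) by (unfold n; rewrite S_INR; pose proof (pos_INR K); lra).
  assert (Hq : 0 <= q) by (unfold q; apply pow_le; auto).
  assert (Hq3 : 0 <= q3) by (unfold q3; apply pow_le; lra).
  assert (Hqq : q3 <= q) by (unfold q3, q; apply pow_incr; lra).
  assert (Hr1 : 0 < / (1 - r)) by (apply Rinv_0_lt_compat; unfold r in *; lra).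
  assert (Hr3 : 0 < / (1 - r / 3)) by (apply Rinv_0_lt_compat; unfold r in *; lra).
  pose proof (CEb_pos g r). pose proof (CEb_pos g (r / 3)).
  pose proof (Cmod_ge_0 P1). pose proof (Cmod_ge_0 P3).
  set (c3 := 2 * CEb g (r / 3) * / (1 - r / 3) * Cmod P3).
  set (c1 := 2 * CEb g r * / (1 - r) * Cmod P1).
  assert (Hc3 : 0 <= c3) by (unfold c3; repeat apply Rmult_le_pos; lra).
  assert (Hc1 : 0 <= c1) by (unfold c1; repeat apply Rmult_le_pos; lra).
  assert (H2' : Cmod (Cminus A P3) <= c3 * (n * q3)).
  { eapply Rle_trans. exact H2. unfold c3. right. ring. }
  assert (H3' : Cmod (Cminus B P1) <= c1 * (n * q)).
  { eapply Rle_trans. exact H3. unfold c1. right. ring. }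
  pose proof (Cmod_ge_0 (Cminus A P3)). pose proof (Cmod_ge_0 B). pose proof (Cmod_ge_0 (Cminus B P1)).
  assert (T2 : Cmod (Cminus A P3) * Cmod B <= c3 * (n ^ 2 * q)).
  { apply Rle_trans with ((c3 * (n * q3)) * n). apply Rmult_le_compat; auto.
    replace (c3 * (n ^ 2 * q)) with ((c3 * n * n) * q) by ring.
    replace (c3 * (n * q3) * n) with ((c3 * n * n) * q3) by ring.
    apply Rmult_le_compat_l; auto. repeat apply Rmult_le_pos; lra. }
  assert (T3 : Cmod P3 * Cmod (Cminus B P1) <= Cmod P3 * c1 * (n ^ 2 * q)).
  { rewrite Rmult_assoc. apply Rmult_le_compat_l; auto. eapply Rle_trans. exact H3'.
    apply Rmult_le_compat_l; auto. simpl. rewrite Rmult_1_r. assert (0 <= n * q) by nra. nra. }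
  assert (T1 : Cmod (Cminus (Cmult A B) (Lsum g w K)) <= n ^ 2 * q).
  { eapply Rle_trans. exact H1. right. simpl. ring. }
  replace ((1 + c3 + Cmod P3 * c1) * (n ^ 2 * q)) with (n ^ 2 * q + c3 * (n ^ 2 * q) + Cmod P3 * c1 * (n ^ 2 * q)) by ring.
  lra.
Qed.

Lemma n_geom_aux q n : 0 <= q < 1 -> q ^ n * (INR n * (1 - q) + 1) <= 1.
Proof.
  intros Hq. induction n.
  - simpl. lra.
  - rewrite S_INR. simpl.
    pose proof (pow_le q n (proj1 Hq)).
    assert (q ^ n <= 1) by (rewrite <- (pow1 n); apply pow_incr; lra).
    pose proof (pos_INR n).
    assert (q * (q ^ n * (INR n * (1 - q) + 1)) <= q * 1) by (apply Rmult_le_compat_l; lra).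
    assert (q * q ^ n <= 1) by nra.
    assert (q * q ^ n * (1 - q) <= 1 * (1 - q)) by (apply Rmult_le_compat_r; lra).
    replace (q * q ^ n * ((INR n + 1) * (1 - q) + 1)) with
      (q * (q ^ n * (INR n * (1 - q) + 1)) + q * q ^ n * (1 - q)) by ring.
    lra.
Qed.

Lemma n_geom q n : 0 <= q < 1 -> INR n * q ^ n <= / (1 - q).
Proof.
  intros Hq. pose proof (n_geom_aux q n Hq).
  pose proof (pow_le q n (proj1 Hq)).
  apply Rmult_le_reg_r with (1 - q); [lra|]. rewrite Rinv_l by lra. nra.
Qed.

Lemma poly_geom_small y d N : 0 <= y < 1 -> 0 < d ->
  exists K, (N <= K)%nat /\ INR (S K) ^ 2 * y ^ S K < d.
Proof.
  intros Hy Hd.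
  set (t := sqrt (sqrt y)).
  assert (Ht0 : 0 <= t) by apply sqrt_pos.
  assert (Hsy : 0 <= sqrt y) by apply sqrt_pos.
  assert (Htt : t * t = sqrt y) by (apply sqrt_sqrt; auto).
  assert (Hyy : sqrt y * sqrt y = y) by (apply sqrt_sqrt; lra).
  assert (Ht1 : t < 1).
  { destruct (Rlt_le_dec t 1); auto. exfalso.
    assert (1 <= sqrt y) by nra. nra. }
  assert (Hq : Rabs (t * t) < 1) by (rewrite Rabs_right; nra).
  assert (Hd' : 0 < d * ((1 - t) * (1 - t))) by (apply Rmult_lt_0_compat; nra).
  destruct (pow_lt_1_zero (t * t) Hq _ Hd') as [N0 HN0].
  exists (Nat.max N N0). split; [lia|].
  set (n := S (Nat.max N N0)).
  assert (H1 : Rabs ((t * t) ^ n) < d * ((1 - t) * (1 - t))) by (apply HN0; unfold n; lia).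
  rewrite Rabs_right in H1 by (apply Rle_ge, pow_le; nra).
  pose proof (n_geom t n (conj Ht0 Ht1)) as H2.
  assert (E : INR n ^ 2 * y ^ n = (INR n * t ^ n) * (INR n * t ^ n) * (t * t) ^ n).
  { rewrite <- Hyy, <- Htt. rewrite !Rpow_mult_distr. ring. }
  rewrite E.
  pose proof (pos_INR n). pose proof (pow_le t n Ht0).
  assert (H3 : 0 <= INR n * t ^ n) by nra.
  assert (H4 : 0 <= (t * t) ^ n) by (apply pow_le; nra).
  assert (Hi : 0 < / (1 - t)) by (apply Rinv_0_lt_compat; lra).
  apply Rle_lt_trans with (/ (1 - t) * / (1 - t) * (t * t) ^ n).
  - apply Rmult_le_compat_r; auto. apply Rmult_le_compat; auto.
  - replace d with (/ (1 - t) * / (1 - t) * (d * ((1 - t) * (1 - t)))) by (field; lra).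
    apply Rmult_lt_compat_l; auto. nra.
Qed.

Lemma bernoulli s k : 0 <= s <= 1 -> 1 - s ^ k <= INR k * (1 - s).
Proof.
  intros Hs. induction k.
  - simpl. lra.
  - rewrite S_INR. simpl.
    assert (s ^ k <= 1) by (rewrite <- (pow1 k); apply pow_incr; lra).
    pose proof (pow_le s k (proj1 Hs)). nra.
Qed.


Definition dseq g s phi C0 (k : nat) : C :=
  if Nat.eqb k 0 then RtoC (l2coef g 0 - C0)
  else Cmult (RtoC (s ^ k * l2coef g k)) (ce (- (INR k * phi))).

Lemma Ssym_d g s phi C0 K th :
  Ssym (dseq g s phi C0) K th =
  Cminus (Cmult (RtoC (rpow (3/2) g)) (Lsum g (Cmult (RtoC s) (ce (th - phi))) K)) (RtoC C0).
Proof.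
  set (w := Cmult (RtoC s) (ce (th - phi))).
  unfold Ssym, Lsum. rewrite <- sum_n_multlC.
  transitivity (sum_n (fun k => Cminus (Cmult (RtoC (l2coef g k)) (Cpow w k))
                                        (if Nat.eqb k 0 then RtoC C0 else RtoC 0)) K).
  - apply sum_n_extC. intros k _. unfold dseq.
    destruct k.
    + simpl Nat.eqb. simpl Cpow.
      replace (INR 0 * th) with 0 by (simpl; ring). rewrite ce_0. rewrite RtoC_minus. cring.
    + simpl Nat.eqb. unfold w. rewrite Cpow_mult_l, ce_pow, <- RtoC_pow.
      rewrite Cmult_assoc_rev_local, <- ce_add, RtoC_mult.
      replace (- (INR (S k) * phi) + INR (S k) * th) with (INR (S k) * (th - phi)) by ring.
      cring.
  - rewrite sum_n_minusC. f_equal.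
    + apply sum_n_extC. intros k _. unfold l2coef. rewrite RtoC_mult. cring.
    + rewrite sum_delta. simpl. reflexivity.
Qed.

Lemma Cmod_ce a : Cmod (ce a) = 1.
Proof.
  unfold ce, Cmod; simpl. pose proof (sin2_cos2 a). unfold Rsqr in H.
  replace (cos a * (cos a * 1) + sin a * (sin a * 1)) with 1 by lra. apply sqrt_1.
Qed.

Definition PB g := exp (g / 2 * ln 4).

Lemma Cmod_Pw_bound g w : 0 < g -> Cmod w < 1 -> Cmod (Pw g w) <= PB g.
Proof.
  intros Hg Hw. unfold Pw, Cmod, PB; simpl.
  set (E := exp _). set (th := g * thfun w 1).
  pose proof (sin2_cos2 th). unfold Rsqr in *.
  match goal with |- sqrt ?X <= _ => replace X with (E * E) by nra end.
  rewrite sqrt_square by (unfold E; left; apply exp_pos).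
  unfold E. apply exp_le_exp. apply Rmult_le_compat_l; [lra|].
  pose proof (Cmod_ge_0 w).
  assert (Hab : Cmod w ^ 2 = fst w ^ 2 + snd w ^ 2).
  { unfold Cmod. rewrite pow2_sqrt; auto. nra. }
  assert (Hm : 0 < mfun w 1).
  { rewrite mfun_Cmod. pose proof (Cmod_p_lower w 1 ltac:(lra)). apply pow_lt. lra. }
  apply ln_le; auto.
  unfold mfun. destruct w as [a b]. simpl in *.
  assert (a * a + b * b < 1) by nra.
  assert (-1 <= a) by nra. nra.
Qed.

Lemma eps_nonneg a b s n : 0 <= a -> 0 <= b -> 0 <= s -> 0 <= a * b * (INR n ^ 2 * s ^ n).
Proof.
  intros. apply Rmult_le_pos; [apply Rmult_le_pos; auto|].
  apply Rmult_le_pos; apply pow_le; auto. apply pos_INR.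
Qed.

Lemma G_main g s phi C0 x v N : 0 < g < 1 -> 0 <= s < 1 -> s <= x <= 1 ->
  C0 <= rpow ((1 - x) * (3 - x) / 2) g ->
  0 <= fst (Fsum (dseq g s phi C0) v N).
Proof.
  intros Hg Hs Hx HC0.
  set (cg := rpow (3/2) g).
  assert (Hcg : 0 < cg).
  { unfold cg, rpow. destruct (Req_EM_T (3/2) 0); [lra|]. unfold Rpower. apply exp_pos. }
  set (Cb := 1 + 2 * CEb g (s / 3) * / (1 - s / 3) * PB g + PB g * (2 * CEb g s * / (1 - s) * PB g)).
  assert (HPB : 0 <= PB g) by (unfold PB; left; apply exp_pos).
  pose proof (CEb_pos g s). pose proof (CEb_pos g (s / 3)).
  assert (Hi1 : 0 < / (1 - s)) by (apply Rinv_0_lt_compat; lra).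
  assert (Hi3 : 0 < / (1 - s / 3)) by (apply Rinv_0_lt_compat; lra).
  assert (HCb : 1 <= Cb).
  { unfold Cb. assert (0 <= 2 * CEb g (s / 3) * / (1 - s / 3) * PB g) by (repeat apply Rmult_le_pos; lra).
    assert (0 <= PB g * (2 * CEb g s * / (1 - s) * PB g)) by (repeat apply Rmult_le_pos; lra). lra. }
  assert (Hsym : forall K th, - (cg * Cb * (INR (S K) ^ 2 * s ^ S K)) <= fst (Ssym (dseq g s phi C0) K th)).
  { intros K th. rewrite Ssym_d. fold cg.
    set (w := Cmult (RtoC s) (ce (th - phi))).
    assert (Hw : Cmod w = s) by (unfold w; rewrite Cmod_mult, Cmod_ce, Cmod_R, Rabs_right; lra).
    assert (Hw1 : Cmod w < 1) by lra.
    pose proof (re_lower g w x Hg Hw1 ltac:(lra)) as HR. fold cg in HR.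
    pose proof (Lsum_err g w K Hg Hw1) as HE.
    assert (HCt : Ctot g w <= Cb).
    { unfold Ctot, Cb. rewrite Hw.
      assert (Hw3 : Cmod (Cmult w (RtoC (/3))) < 1) by (rewrite Cmod_w3; lra).
      pose proof (Cmod_Pw_bound g w (proj1 Hg) Hw1).
      pose proof (Cmod_Pw_bound g _ (proj1 Hg) Hw3).
      pose proof (Cmod_ge_0 (Pw g w)). pose proof (Cmod_ge_0 (Pw g (Cmult w (RtoC (/3))))).
      set (a1 := Cmod (Pw g w)) in *. set (a3 := Cmod (Pw g (Cmult w (RtoC (/3))))) in *.
      set (k3 := 2 * CEb g (s / 3) * / (1 - s / 3)). set (k1 := 2 * CEb g s * / (1 - s)).
      assert (0 <= k3) by (unfold k3; repeat apply Rmult_le_pos; lra).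
      assert (0 <= k1) by (unfold k1; repeat apply Rmult_le_pos; lra).
      assert (k3 * a3 <= k3 * PB g) by (apply Rmult_le_compat_l; lra).
      assert (a3 * (k1 * a1) <= PB g * (k1 * PB g)).
      { apply Rmult_le_compat; try lra. apply Rmult_le_pos; lra. apply Rmult_le_compat_l; lra. }
      lra. }
    rewrite Hw in HE.
    set (L := Lsum g w K) in *. set (P := Cmult (Pw g w) (Pw g (Cmult w (RtoC (/3))))) in *.
    assert (E : fst (Cminus (Cmult (RtoC cg) L) (RtoC C0)) =
                fst (Cmult (RtoC cg) P) + cg * fst (Cminus L P) - C0).
    { destruct L, P; simpl; ring. }
    rewrite E.
    pose proof (re_le_Cmod (Cminus L P)). unfold Re in H1.
    assert (- Cmod (Cminus L P) <= fst (Cminus L P)).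
    { pose proof (Rle_abs (- fst (Cminus L P))). rewrite Rabs_Ropp in H2. lra. }
    assert (0 <= INR (S K) ^ 2 * s ^ S K).
    { apply Rmult_le_pos. apply pow_le, pos_INR. apply pow_le; lra. }
    assert (Cmod (Cminus L P) <= Cb * (INR (S K) ^ 2 * s ^ S K)).
    { eapply Rle_trans. exact HE. apply Rmult_le_compat_r; auto. }
    assert (H5 : - (Cb * (INR (S K) ^ 2 * s ^ S K)) <= fst (Cminus L P)) by lra.
    assert (H6 : cg * (- (Cb * (INR (S K) ^ 2 * s ^ S K))) <= cg * fst (Cminus L P))
      by (apply Rmult_le_compat_l; lra).
    assert (H7 : fst (Cmult (RtoC cg) P) - C0 >= 0) by lra.
    replace (- (cg * Cb * (INR (S K) ^ 2 * s ^ S K))) with (cg * (- (Cb * (INR (S K) ^ 2 * s ^ S K)))) by ring.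
    lra. }
  pose proof (Fsum_delta_nonneg v N) as HD.
  destruct (Rle_lt_dec 0 (fst (Fsum (dseq g s phi C0) v N))) as [Hok|Hneg]; auto.
  exfalso.
  set (F := fst (Fsum (dseq g s phi C0) v N)) in *.
  set (D := fst (Fsum delta0 v N)) in *.
  assert (HDp : 0 < D).
  { destruct HD as [HD|HD]; auto. exfalso.
    pose proof (toep_ineq (dseq g s phi C0) v N N (cg * Cb * (INR (S N) ^ 2 * s ^ S N)) (le_n _)) as T.
    assert (0 <= cg * Cb * (INR (S N) ^ 2 * s ^ S N)) by (apply eps_nonneg; lra).
    specialize (T H1 (Hsym N)). fold F D in T. rewrite <- HD in T. lra. }
  assert (Hd : 0 < - F / (cg * Cb * D)).
  { apply Rdiv_lt_0_compat. lra. repeat apply Rmult_lt_0_compat; lra. }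
  destruct (poly_geom_small s _ N (conj (proj1 Hs) (proj2 Hs)) Hd) as [K [HK1 HK2]].
  assert (He0 : 0 <= cg * Cb * (INR (S K) ^ 2 * s ^ S K)) by (apply eps_nonneg; lra).
  pose proof (toep_ineq (dseq g s phi C0) v N K _ HK1 He0 (Hsym K)) as T.
  fold F D in T.
  assert (cg * Cb * D * (INR (S K) ^ 2 * s ^ S K) < cg * Cb * D * (- F / (cg * Cb * D))).
  { apply Rmult_lt_compat_l; auto. repeat apply Rmult_lt_0_compat; lra. }
  replace (cg * Cb * D * (- F / (cg * Cb * D))) with (- F) in H1 by (field; repeat split; lra).
  nra.
Qed.


Lemma Fsum_lip c d v N :
  Rabs (fst (Fsum c v N) - fst (Fsum d v N)) <=
  sum_n (fun n => sum_n (fun k => Cmod (Cminus (c k) (d k)) * Cmod (v (n - k)%nat) * Cmod (v n)) n) N.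
Proof.
  assert (E : Cminus (Fsum c v N) (Fsum d v N) =
     sum_n (fun n => sum_n (fun k => Cmult (Cmult (Cminus (c k) (d k)) (v (n - k)%nat)) (Cconj (v n))) n) N).
  { unfold Fsum. rewrite <- sum_n_minusC. apply sum_n_extC. intros n _.
    rewrite <- !sum_n_multrC, <- sum_n_minusC. apply sum_n_extC. intros k _. cring. }
  replace (fst (Fsum c v N) - fst (Fsum d v N)) with (fst (Cminus (Fsum c v N) (Fsum d v N)))
    by (destruct (Fsum c v N), (Fsum d v N); simpl; ring).
  eapply Rle_trans. apply re_le_Cmod. unfold Re. rewrite E.
  eapply Rle_trans. apply Cmod_sum_n. apply sum_n_leR. intros n _.
  eapply Rle_trans. apply Cmod_sum_n. apply sum_n_leR. intros k _.
  rewrite !Cmod_mult, Cmod_conj. lra.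
Qed.

Lemma dseq_diff g s phi k : 0 <= s <= 1 ->
  Cmod (Cminus (dseq g 1 phi 0 k) (dseq g s phi 0 k)) <= (1 - s) * (INR k * Rabs (l2coef g k)).
Proof.
  intros Hs. unfold dseq. destruct (Nat.eqb_spec k 0).
  - subst. replace (Cminus (RtoC (l2coef g 0 - 0)) (RtoC (l2coef g 0 - 0))) with (RtoC 0) by ring.
    rewrite Cmod_0. simpl. lra.
  - replace (Cminus (Cmult (RtoC (1 ^ k * l2coef g k)) (ce (- (INR k * phi))))
                    (Cmult (RtoC (s ^ k * l2coef g k)) (ce (- (INR k * phi)))))
      with (Cmult (RtoC ((1 - s ^ k) * l2coef g k)) (ce (- (INR k * phi)))).
    + rewrite Cmod_mult, Cmod_ce, Cmod_R, Rabs_mult, Rmult_1_r.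
      pose proof (bernoulli s k Hs).
      assert (s ^ k <= 1) by (rewrite <- (pow1 k); apply pow_incr; lra).
      rewrite Rabs_right by lra. pose proof (Rabs_pos (l2coef g k)).
      replace ((1 - s) * (INR k * Rabs (l2coef g k))) with ((INR k * (1 - s)) * Rabs (l2coef g k)) by ring.
      apply Rmult_le_compat_r; lra.
    + rewrite pow1. rewrite !RtoC_mult, RtoC_minus. ring.
Qed.

Lemma limit_case g phi v N : 0 < g < 1 -> 0 <= fst (Fsum (dseq g 1 phi 0) v N).
Proof.
  intros Hg.
  set (Bv := sum_n (fun n => sum_n (fun k => (INR k * Rabs (l2coef g k)) * Cmod (v (n - k)%nat) * Cmod (v n)) n) N).
  assert (HBv : 0 <= Bv).
  { unfold Bv. apply Rle_trans with (sum_n (fun _ => 0) N). rewrite sum_n_constR; lra.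
    apply sum_n_leR. intros n _. apply Rle_trans with (sum_n (fun _ => 0) n). rewrite sum_n_constR; lra.
    apply sum_n_leR. intros k _. pose proof (pos_INR k). pose proof (Rabs_pos (l2coef g k)).
    pose proof (Cmod_ge_0 (v (n - k)%nat)). pose proof (Cmod_ge_0 (v n)).
    repeat apply Rmult_le_pos; auto. }
  assert (Hs : forall s, 0 <= s < 1 -> fst (Fsum (dseq g 1 phi 0) v N) >= - ((1 - s) * Bv)).
  { intros s Hs.
    pose proof (G_main g s phi 0 1 v N Hg Hs ltac:(lra)) as G.
    assert (HC : 0 <= rpow ((1 - 1) * (3 - 1) / 2) g).
    { unfold rpow. destruct (Req_EM_T ((1 - 1) * (3 - 1) / 2) 0); [lra|]. left; apply exp_pos. }
    specialize (G HC).
    pose proof (Fsum_lip (dseq g 1 phi 0) (dseq g s phi 0) v N) as L.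
    assert (Hle : sum_n (fun n => sum_n (fun k => Cmod (Cminus (dseq g 1 phi 0 k) (dseq g s phi 0 k)) * Cmod (v (n - k)%nat) * Cmod (v n)) n) N
                  <= (1 - s) * Bv).
    { unfold Bv. rewrite <- sum_n_RmultL. apply sum_n_leR. intros n _.
      rewrite <- sum_n_RmultL. apply sum_n_leR. intros k _.
      pose proof (dseq_diff g s phi k ltac:(lra)).
      pose proof (Cmod_ge_0 (v (n - k)%nat)). pose proof (Cmod_ge_0 (v n)).
      replace ((1 - s) * (INR k * Rabs (l2coef g k) * Cmod (v (n - k)%nat) * Cmod (v n)))
        with ((1 - s) * (INR k * Rabs (l2coef g k)) * Cmod (v (n - k)%nat) * Cmod (v n)) by ring.
      apply Rmult_le_compat_r; auto. apply Rmult_le_compat_r; auto. }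
    pose proof (Rle_abs (- (fst (Fsum (dseq g 1 phi 0) v N) - fst (Fsum (dseq g s phi 0) v N)))).
    rewrite Rabs_Ropp in H. lra. }
  destruct (Rle_lt_dec 0 (fst (Fsum (dseq g 1 phi 0) v N))) as [Hok|Hneg]; auto.
  exfalso. set (F := fst (Fsum (dseq g 1 phi 0) v N)) in *.
  set (d := Rmin (1/2) (- F / (2 * (Bv + 1)))).
  assert (Hd0 : 0 < d).
  { unfold d. apply Rmin_glb_lt. lra. apply Rdiv_lt_0_compat; lra. }
  assert (Hd1 : d <= 1/2) by apply Rmin_l.
  assert (Hd2 : d <= - F / (2 * (Bv + 1))) by apply Rmin_r.
  specialize (Hs (1 - d) ltac:(lra)).
  replace (1 - (1 - d)) with d in Hs by ring.
  assert (d * Bv <= - F / (2 * (Bv + 1)) * Bv) by (apply Rmult_le_compat_r; auto).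
  assert (- F / (2 * (Bv + 1)) * Bv < - F).
  { unfold Rdiv. apply Rmult_lt_reg_r with (2 * (Bv + 1)); [lra|].
    replace (- F * / (2 * (Bv + 1)) * Bv * (2 * (Bv + 1))) with (- F * Bv) by (field; lra). nra. }
  lra.
Qed.

Lemma cc_dseq g lam tau eta rho u k :
  cc g lam tau eta rho u k = dseq g (exp (- (lam + rho * u) * tau)) (eta * u * tau) (CstL g lam tau) k.
Proof.
  unfold cc, dseq. destruct k.
  - simpl Nat.eqb. unfold l2mod, cexpmJ. replace (eta * u * INR 0 * tau) with 0 by (simpl; ring).
    rewrite cos_0, sin_0. unfold CstL. apply injective_projections; simpl; ring.
  - simpl Nat.eqb. unfold l2mod. rewrite <- exp_INR_mult.
    unfold cexpmJ, ce. rewrite cos_neg, sin_neg.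
    replace (INR (S k) * (- (lam + rho * u) * tau)) with (- (lam + rho * u) * INR (S k) * tau) by ring.
    replace (INR (S k) * (eta * u * tau)) with (eta * u * INR (S k) * tau) by ring.
    reflexivity.
Qed.

Lemma Cst_eq g lam tau : CstL g lam tau = rpow ((1 - exp (- lam * tau)) * (3 - exp (- lam * tau)) / 2) g.
Proof.
  unfold CstL. f_equal. simpl. field.
Qed.

Theorem lemma3p7 (gamma lam tau eta rho u : R)
  (hg0 : 0 < gamma) (hg1 : gamma < 1) (hlam : 0 <= lam) (htau : 0 < tau)
  (hru : 0 <= rho * u) :
  forall (N : nat), (1 <= N)%nat -> forall v : nat -> C,
  0 <= Re (sum_n (fun n =>
        Cmult (sum_n (fun k =>
                 Cmult (Cmult (RtoC (l2mod gamma lam tau rho u k))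
                              (cexpmJ (eta * u * INR k * tau)))
                       (v (n - k)%nat)) n)
              (Cconj (v n))) N).
Proof.
  intros N HN v.
  change (0 <= fst (Fsum (cc gamma lam tau eta rho u) v N)).
  assert (E : Fsum (cc gamma lam tau eta rho u) v N =
              Fsum (dseq gamma (exp (- (lam + rho * u) * tau)) (eta * u * tau) (CstL gamma lam tau)) v N).
  { unfold Fsum. apply sum_n_extC. intros n _. f_equal. apply sum_n_extC. intros k _.
    rewrite cc_dseq. reflexivity. }
  rewrite E. clear E.
  set (x := exp (- lam * tau)). set (y := exp (- (lam + rho * u) * tau)).
  assert (Hx1 : x <= 1).
  { unfold x. rewrite <- exp_0. apply exp_le_exp. nra. }
  assert (Hyx : y <= x).
  { unfold x, y. apply exp_le_exp. nra. }
  assert (Hy0 : 0 < y) by (unfold y; apply exp_pos).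
  assert (Hg : 0 < gamma < 1) by lra.
  destruct (Rlt_le_dec y 1) as [Hy1|Hy1].
  - apply (G_main gamma y (eta * u * tau) (CstL gamma lam tau) x v N Hg ltac:(lra) ltac:(lra)).
    rewrite Cst_eq. fold x. lra.
  - assert (Hy : y = 1) by lra. assert (Hx : x = 1) by lra.
    rewrite Hy.
    assert (HC : CstL gamma lam tau = 0).
    { rewrite Cst_eq. fold x. rewrite Hx. unfold rpow.
      destruct (Req_EM_T ((1 - 1) * (3 - 1) / 2) 0); [reflexivity|lra]. }
    rewrite HC. apply limit_case. exact Hg.
Qed.
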